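(* Let $W\subseteq\mathbb{R}^m$ be a nonempty closed convex set with Euclidean projection $\Pi_W$, and let $g_1,\dots,g_n:\mathbb{R}^m\to\mathbb{R}$ be convex. Let $F=\frac1n\sum_{j=1}^n g_j$ be $\mu$-strongly convex on $W$ with $\mu>0$, and let $\boldsymbol{x}_*=\arg\min_{\boldsymbol{x}\in W}F(\boldsymbol{x})$. Let $b$ divide $n$, let $d=n/b$, and let $\tau_1,\dots,\tau_d$ be a partition of $\{1,\dots,n\}$ into sets of size $b$. Put $g_{\tau_i}=\frac1b\sum_{j\in\tau_i}g_j$. For each $i$, let $h_{\tau_i}(\boldsymbol{x})\in\partial g_{\tau_i}(\boldsymbol{x})$ be a subgradient selection with $\sup_{\boldsymbol{x}\in W}\|h_{\tau_i}(\boldsymbol{x})\|_2\le G_{\tau_i}$, where $G_{\tau_i}>0$. Set $$\overline{G}_\tau=\frac1d\sum_{i=1}^d G_{\tau_i},\qquad p(\tau_i)=\frac{G_{\tau_i}}{\sum_{j=1}^d G_{\tau_j}}.$$ Fix $\boldsymbol{x}_1\in W$ and run $$\boldsymbol{x}_{k+1}=\Pi_W\Big(\boldsymbol{x}_k-\frac{1}{\mu k}\cdot\frac{1}{d\,p(\tau_{i_k})}h_{\tau_{i_k}}(\boldsymbol{x}_k)\Big),$$ with batches drawn i.i.d. from $p$. For $\alpha\in(0,1)$, let $\bar{\boldsymbol{x}}_k^\alpha$ be the average of the last $\lceil\alpha k\rceil$ iterates $\boldsymbol{x}_{k-\lceil\alpha k\rceil+1},\dots,\boldsymbol{x}_k$,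 and set $m_\alpha=1+\log\frac1{\min(\alpha,1-\alpha)}$. Then there is an absolute constant $C$ such that for every $\varepsilon>0$ and every $$k\ge\frac{C(\overline{G}_\tau)^2m_\alpha}{\mu\varepsilon}$$ one has $\mathbb{E}^{(p)}[F(\bar{\boldsymbol{x}}_k^\alpha)-F(\boldsymbol{x}_* )]\le\varepsilon$.
   Context: $\mathbb{E}^{(p)}$ denotes expectation over the batch indices drawn i.i.d. from $p$. $\partial g$ denotes the convex subdifferential. *)

(* Defs.v *)
From Stdlib Require Import Reals.
From mathcomp Require Import all_boot.
Set Implicit Arguments. Unset Strict Implicit. Unset Printing Implicit Defensive.
Local Open Scope R_scope.

Definition vec (m : nat) := 'I_m -> R.
Definition vzero m : vec m := fun _ => 0.
Definition vadd m (x y : vec m) : vec m := fun i => x i + y i.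
Definition vsub m (x y : vec m) : vec m := fun i => x i - y i.
Definition vscal m (a : R) (x : vec m) : vec m := fun i => a * x i.
Definition sumO (n : nat) (f : 'I_n -> R) : R := \big[Rplus/0]_(i < n) f i.
Definition dot m (x y : vec m) : R := sumO (fun i => x i * y i).
Definition vnorm m (x : vec m) : R := sqrt (dot x x).

Definition convex_Rm m (W : vec m -> Prop) : Prop :=
  forall x y t, W x -> W y -> 0 <= t <= 1 -> W (vadd (vscal t x) (vscal (1 - t) y)).
Definition closed_Rm m (W : vec m -> Prop) : Prop :=
  forall x, (forall eps, 0 < eps -> exists y, W y /\ vnorm (vsub x y) < eps) -> W x.
Definition convex_fun m (f : vec m -> R) : Prop :=
  forall x y t, 0 <= t <= 1 ->
    f (vadd (vscal t x) (vscal (1 - t) y)) <= t * f x + (1 - t) * f y.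
Definition strongly_convex_on m (mu : R) (W : vec m -> Prop) (f : vec m -> R) : Prop :=
  forall x y t, W x -> W y -> 0 <= t <= 1 ->
    f (vadd (vscal t x) (vscal (1 - t) y))
      <= t * f x + (1 - t) * f y - mu / 2 * t * (1 - t) * (vnorm (vsub x y)) ^ 2.
Definition is_proj m (W : vec m -> Prop) (Pi : vec m -> vec m) : Prop :=
  forall y, W (Pi y) /\ (forall z, W z -> vnorm (vsub y (Pi y)) <= vnorm (vsub y z)).
Definition is_subgradient m (f : vec m -> R) (x h : vec m) : Prop :=
  forall y, f x + dot h (vsub y x) <= f y.

Definition avgF m n (g : 'I_n -> vec m -> R) (x : vec m) : R :=
  / INR n * \big[Rplus/0]_(j < n) g j x.
Definition batch_fun m n (S : {set 'I_n}) (b : nat) (g : 'I_n -> vec m -> R)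
  (x : vec m) : R := / INR b * \big[Rplus/0]_(j in S) g j x.

Definition Gbar d (G : 'I_d -> R) : R := / INR d * sumO G.
Definition prob d (G : 'I_d -> R) (i : 'I_d) : R := G i / sumO G.

Definition ceil_nat (x : R) : nat := Z.to_nat (- Int_part (- x)).
Definition m_alpha (alpha : R) : R := 1 + ln (/ Rmin alpha (1 - alpha)).

Definition sgd_step m d (Pi : vec m -> vec m) (mu : R) (h : 'I_d -> vec m -> vec m)
  (G : 'I_d -> R) (k : nat) (i : 'I_d) (x : vec m) : vec m :=
  Pi (vsub x (vscal (/ (mu * INR k) * / (INR d * prob G i)) (h i x))).

(* sgd_run .. k x [:: i_k; ...; i_{k+N-1}] = [:: x_k; ...; x_{k+N}] with x_k = x *)
Fixpoint sgd_run m d (Pi : vec m -> vec m) (mu : R) (h : 'I_d -> vec m -> vec m)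
  (G : 'I_d -> R) (k : nat) (x : vec m) (l : seq 'I_d) : seq (vec m) :=
  match l with
  | [::] => [:: x]
  | i :: l' => x :: sgd_run Pi mu h G k.+1 (sgd_step Pi mu h G k i x) l'
  end.

Definition tail_avg m (L : nat) (xs : seq (vec m)) : vec m :=
  vscal (/ INR L) (foldr (fun u v : vec m => vadd u v) (fun _ : 'I_m => 0) (drop (size xs - L)%N xs)).

(* expectation of f over N i.i.d. indices drawn from p:
   f is applied to [:: i_1; ...; i_N] *)
Fixpoint expectN d (p : 'I_d -> R) (N : nat) (f : seq 'I_d -> R) : R :=
  match N with
  | O => f [::]
  | S N' => \big[Rplus/0]_(i < d) (p i * expectN p N' (fun l => f (i :: l)))
  end.

(* Main.v *)
From HB Require Import structures.
Require Import Defs.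
From Stdlib Require Import Reals Lra Lia ZArith FunctionalExtensionality.
From mathcomp Require Import all_boot zify.
Set Implicit Arguments. Unset Strict Implicit. Unset Printing Implicit Defensive.
Local Open Scope R_scope.

HB.instance Definition _ := Monoid.isComLaw.Build R 0 Rplus
  (fun a b c => esym (Rplus_assoc a b c)) Rplus_comm Rplus_0_l.

Lemma bigR_scal (I : Type) (r : seq I) (P : pred I) (f : I -> R) a :
  \big[Rplus/0]_(i <- r | P i) (a * f i) = a * \big[Rplus/0]_(i <- r | P i) f i.
Proof.
elim: r => [|x r IH]; first by rewrite !big_nil; ring.
rewrite !big_cons; case: (P x); rewrite IH //; ring.
Qed.

Lemma bigR_add (I : Type) (r : seq I) (P : pred I) (f g : I -> R) :
  \big[Rplus/0]_(i <- r | P i) (f i + g i) =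
  \big[Rplus/0]_(i <- r | P i) f i + \big[Rplus/0]_(i <- r | P i) g i.
Proof. by rewrite big_split. Qed.

Lemma bigR_le (I : Type) (r : seq I) (P : pred I) (f g : I -> R) :
  (forall i, P i -> f i <= g i) ->
  \big[Rplus/0]_(i <- r | P i) f i <= \big[Rplus/0]_(i <- r | P i) g i.
Proof.
move=> H; elim: r => [|x r IH]; first by rewrite !big_nil; lra.
rewrite !big_cons; case Px: (P x) => //; have := H x Px; lra.
Qed.

Lemma bigR_ge0 (I : Type) (r : seq I) (P : pred I) (f : I -> R) :
  (forall i, P i -> 0 <= f i) -> 0 <= \big[Rplus/0]_(i <- r | P i) f i.
Proof.
move=> H; have := @bigR_le I r P (fun _ => 0) f H.
have -> : \big[Rplus/0]_(i <- r | P i) (fun _ => 0) i = 0.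
  by rewrite big1.
done.
Qed.

Lemma bigR_const (I : Type) (r : seq I) (P : pred I) (f : I -> R) a :
  \big[Rplus/0]_(i <- r | P i) (f i * a) = (\big[Rplus/0]_(i <- r | P i) f i) * a.
Proof.
rewrite Rmult_comm -bigR_scal; apply: eq_bigr => i _; ring.
Qed.

Lemma vext m (x y : vec m) : (forall i, x i = y i) -> x = y.
Proof. move=> H; exact: functional_extensionality. Qed.

Definition sq m (x : vec m) := dot x x.

Lemma dot_sym m (x y : vec m) : dot x y = dot y x.
Proof. rewrite /dot /sumO; apply: eq_bigr => i _; ring. Qed.

Lemma dot_addl m (x y z : vec m) : dot (vadd x y) z = dot x z + dot y z.
Proof. rewrite /dot /sumO -bigR_add; apply: eq_bigr => i _; rewrite /vadd; ring. Qed.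

Lemma dot_subl m (x y z : vec m) : dot (vsub x y) z = dot x z - dot y z.
Proof.
have -> : dot x z - dot y z = dot x z + (-1) * dot y z by ring.
rewrite /dot /sumO -bigR_scal -bigR_add.
apply: eq_bigr => i _; rewrite /vsub; ring.
Qed.

Lemma dot_scall m a (x z : vec m) : dot (vscal a x) z = a * dot x z.
Proof. rewrite /dot /sumO -bigR_scal; apply: eq_bigr => i _; rewrite /vscal; ring. Qed.

Lemma dot_subr m (x y z : vec m) : dot z (vsub x y) = dot z x - dot z y.
Proof. by rewrite dot_sym dot_subl !(dot_sym z). Qed.

Lemma dot_scalr m a (x z : vec m) : dot z (vscal a x) = a * dot z x.
Proof. by rewrite dot_sym dot_scall dot_sym. Qed.

Lemma sq_ge0 m (x : vec m) : 0 <= sq x.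
Proof. apply: bigR_ge0 => i _; nra. Qed.

Lemma vnorm_sq m (x : vec m) : vnorm x ^ 2 = sq x.
Proof. rewrite /vnorm pow2_sqrt //; exact: sq_ge0. Qed.

Lemma sq_sub m (u v : vec m) : sq (vsub u v) = sq u - 2 * dot u v + sq v.
Proof. rewrite /sq dot_subl !dot_subr (dot_sym v u); ring. Qed.

Lemma lim0 a b : (forall s, 0 < s <= 1 -> a <= s * b) -> a <= 0.
Proof.
move=> H; case: (Rle_lt_dec a 0) => // Ha.
have Hb : 0 < Rabs b + a + 1 by have := Rabs_pos b; lra.
set s := a / (Rabs b + a + 1).
have Hs : 0 < s <= 1.
  split; first by apply: Rdiv_lt_0_compat.
  rewrite /s; apply: (Rmult_le_reg_r (Rabs b + a + 1)) => //.
  field_simplify; try lra; have := Rabs_pos b; lra.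
have := H s Hs.
have : s * b <= s * Rabs b by apply: Rmult_le_compat_l; [lra|exact: Rle_abs].
have : s * (Rabs b + a + 1) = a by rewrite /s; field; lra.
have := Rabs_pos b; nra.
Qed.

Lemma proj_sq m (W : vec m -> Prop) Pi :
  convex_Rm W -> is_proj W Pi ->
  forall y z, W z -> sq (vsub (Pi y) z) <= sq (vsub y z).
Proof.
move=> Hc Hp y z Wz.
have [Wp Hmin] := Hp y.
set p := Pi y.
set u := vsub y p. set v := vsub z p.
have key : dot u v <= 0.
  suff: 2 * dot u v <= 0 by lra.
  apply: (@lim0 _ (sq v)) => s Hs.
  have Ww := Hc z p s Wz Wp ltac:(lra).
  have := Hmin _ Ww.
  set w := vadd _ _ => Hle.
  have Hsq : sq u <= sq (vsub y w).
    rewrite -!vnorm_sq; apply: pow_incr; split => //; exact: sqrt_pos.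
  have Hyw : vsub y w = vsub u (vscal s v).
    by apply: vext => i; rewrite /w /u /v /vsub /vadd /vscal; ring.
  rewrite Hyw sq_sub dot_scalr /sq dot_scall dot_scalr in Hsq.
  rewrite /sq in Hsq; rewrite /sq.
  apply: (Rmult_le_reg_l s); [lra|nra].
have -> : vsub y z = vsub u v by apply: vext => i; rewrite /u /v /vsub; ring.
have -> : vsub p z = vscal (-1) v by apply: vext => i; rewrite /v /vsub /vscal; ring.
rewrite sq_sub /sq dot_scall dot_scalr.
have := sq_ge0 u; rewrite /sq; nra.
Qed.

Section Expect.
Variables (d : nat) (p : 'I_d -> R).
Hypothesis psum : \big[Rplus/0]_(i < d) p i = 1.
Hypothesis pnn : forall i, 0 <= p i.

Lemma E_const N a : expectN p N (fun _ => a) = a.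
Proof.
elim: N => //= N IH.
under eq_bigr do rewrite IH.
by rewrite bigR_const psum Rmult_1_l.
Qed.

Lemma E_add N f g : expectN p N (fun l => f l + g l) = expectN p N f + expectN p N g.
Proof.
elim: N f g => //= N IH f g.
rewrite -bigR_add; apply: eq_bigr => i _; rewrite IH; ring.
Qed.

Lemma E_scal N a f : expectN p N (fun l => a * f l) = a * expectN p N f.
Proof.
elim: N f => //= N IH f.
rewrite -bigR_scal; apply: eq_bigr => i _; rewrite IH; ring.
Qed.

Lemma E_add_const N a f : expectN p N (fun l => a + f l) = a + expectN p N f.
Proof. by rewrite E_add E_const. Qed.

Lemma E_mono N f g : (forall l, size l = N -> f l <= g l) ->
  expectN p N f <= expectN p N g.
Proof.
elim: N f g => [|N IH] f g H /=; first exact: H.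
apply: bigR_le => i _; apply: Rmult_le_compat_l => //.
apply: IH => l Hl; apply: H => /=; by rewrite Hl.
Qed.

Lemma E_ext N f g : (forall l, size l = N -> f l = g l) ->
  expectN p N f = expectN p N g.
Proof.
move=> H; apply: Rle_antisym; apply: E_mono => l Hl; rewrite H //; lra.
Qed.

Lemma E_snoc N f : expectN p N.+1 f =
  expectN p N (fun l => \big[Rplus/0]_(i < d) (p i * f (l ++ [:: i]))).
Proof.
elim: N f => [|N IH] f //.
transitivity (\big[Rplus/0]_(j < d) (p j * expectN p N.+1 (fun l => f (j :: l)))); first by [].
by apply: eq_bigr => j _; rewrite IH.
Qed.

Lemma E_cat N1 N2 f : expectN p (N1 + N2) f =
  expectN p N1 (fun l1 => expectN p N2 (fun l2 => f (l1 ++ l2))).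
Proof.
elim: N1 f => [|N1 IH] f //.
transitivity (\big[Rplus/0]_(j < d) (p j * expectN p (N1 + N2) (fun l => f (j :: l)))); first by [].
by apply: eq_bigr => j _; rewrite IH.
Qed.
End Expect.

Definition harm (a n : nat) : R := \big[Rplus/0]_(i < n) / INR (a + i).

Lemma harm_S a n : harm a n.+1 = / INR a + harm a.+1 n.
Proof.
rewrite /harm big_ord_recl addn0; congr (_ + _).
by apply: eq_bigr => i _; congr (/ INR _); rewrite lift0 addSnnS.
Qed.

Lemma harm_Sr a n : harm a n.+1 = harm a n + / INR (a + n).
Proof. by rewrite /harm big_ord_recr. Qed.

Lemma harm_le a n : (0 < a)%N -> harm a n <= INR n / INR a.
Proof.
move=> Ha; rewrite /harm.
have Ha' : 0 < INR a by apply: lt_0_INR; apply/ltP.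
apply: Rle_trans (_ : \big[Rplus/0]_(i < n) / INR a <= _).
  apply: bigR_le => i _; apply: Rinv_le_contravar => //; apply: le_INR; apply/leP; exact: leq_addr.
have -> : \big[Rplus/0]_(i < n) / INR a = INR n * / INR a.
  elim: n => [|n IH]; first by rewrite big_ord0 INR_0 Rmult_0_l.
  by rewrite big_ord_recr IH S_INR /=; ring.
lra.
Qed.

Lemma ln_le x y : 0 < x -> x <= y -> ln x <= ln y.
Proof.
move=> Hx Hxy; case: (Rle_lt_or_eq_dec _ _ Hxy) => H.
  by left; apply: ln_increasing.
by rewrite H; right.
Qed.

Lemma inv_le_ln x : 1 <= x -> / (x + 1) <= ln (x + 1) - ln x.
Proof.
move=> Hx.
have H1 := exp_ineq1_le (- / (x + 1)).
have Hq : 1 + - / (x + 1) = x / (x + 1) by field; lra.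
rewrite Hq in H1.
have Hpos : 0 < x / (x + 1) by apply: Rdiv_lt_0_compat; lra.
have := ln_le Hpos H1.
rewrite ln_exp /Rdiv ln_mult; try lra; last by apply: Rinv_0_lt_compat; lra.
rewrite ln_Rinv; lra.
Qed.

Lemma harm_ln a n : (0 < a)%N -> harm a n.+1 <= / INR a + ln (INR (a + n) / INR a).
Proof.
move=> Ha.
have Ha' : 0 < INR a by apply: lt_0_INR; apply/ltP.
elim: n => [|n IH].
  rewrite /harm big_ord_recr big_ord0 addn0 /Rdiv Rinv_r; last lra.
  rewrite ln_1 /=; lra.
rewrite harm_Sr.
have Hx : 1 <= INR (a + n).
  have: (1 <= a + n)%N by rewrite (leq_trans Ha) // leq_addr.
  move/leP/le_INR; rewrite INR_1 //.
have := inv_le_ln Hx.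
rewrite -S_INR addnS.
have HS : 0 < INR (a + n).+1 by apply: lt_0_INR; lia.
have Hi : 0 < / INR a by apply: Rinv_0_lt_compat.
rewrite /Rdiv !ln_mult in IH *; try lra.
Qed.

Definition vsum m (ys : seq (vec m)) : vec m :=
  foldr (fun u v : vec m => vadd u v) (fun _ : 'I_m => 0) ys.

Lemma jensen m (F : vec m -> R) : convex_fun F -> forall n (ys : seq (vec m)),
  size ys = n.+1 ->
  F (vscal (/ INR n.+1) (vsum ys)) <= / INR n.+1 * foldr (fun u acc => F u + acc) 0 ys.
Proof.
move=> HF; elim=> [|n IH] [|u ys] //= Hs.
  case: ys Hs => //= _.
  have -> : vscal (/ 1) (vadd u (fun _ : 'I_m => 0)) = u.
    by apply: vext => i; rewrite /vscal /vadd Rinv_1; ring.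
  rewrite Rinv_1; lra.
case: Hs => Hs.
have Hn : 0 < INR n.+1 by apply: lt_0_INR; lia.
set t := / (INR n.+1 + 1).
have Ht : 0 <= t <= 1.
  rewrite /t; split; first by apply: Rlt_le; apply: Rinv_0_lt_compat; lra.
  rewrite -Rinv_1; apply: Rinv_le_contravar; lra.
have -> : vscal t (vadd u (vsum ys)) =
  vadd (vscal t u) (vscal (1 - t) (vscal (/ INR n.+1) (vsum ys))).
  apply: vext => i; rewrite /vscal /vadd /t; field; lra.
apply: Rle_trans (HF _ _ _ Ht) _.
have := IH ys Hs.
move=> H.
have : (1 - t) * F (vscal (/ INR n.+1) (vsum ys)) <= (1 - t) * (/ INR n.+1 * foldr (fun u acc => F u + acc) 0 ys).
  apply: Rmult_le_compat_l => //; lra.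
have -> : (1 - t) * (/ INR n.+1 * foldr (fun u acc => F u + acc) 0 ys) = t * foldr (fun u acc => F u + acc) 0 ys.
  by rewrite /t; field; lra.
lra.
Qed.

Section Final.
Variables (sig : nat -> R) (c alpha : R) (T L : nat).
Hypothesis Hc : 0 < c.
Hypothesis Ha : 0 < alpha < 1.
Hypothesis HL : (1 <= L <= T)%N.
Hypothesis HLa : alpha * INR T <= INR L.
Hypothesis HLb : INR L < alpha * INR T + 1.
Hypothesis HR : forall k, (1 <= k)%N -> (k < T)%N ->
  INR k.+1 * sig k <= INR k * sig k.+1 + c * harm (T - k) k.+1.
Hypothesis HB : forall J, (1 <= J <= T)%N -> sig J <= 4 * c + c * harm (T - J).+1 J.

Let mn := Rmin alpha (1 - alpha).

Lemma mn_pos : 0 < mn.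
Proof. rewrite /mn; apply: Rmin_glb_lt; lra. Qed.

Lemma ln_mn_ge0 : 0 <= ln (/ mn).
Proof.
have H := mn_pos.
rewrite -ln_1; apply: ln_le; first lra.
rewrite -Rinv_1; apply: Rinv_le_contravar => //.
rewrite /mn; have := Rmin_l alpha (1 - alpha); lra.
Qed.

Lemma step_k k : (1 <= k)%N -> (k < T)%N ->
  sig k / INR k <= sig k.+1 / INR k.+1 + c / (INR k * INR (T - k)).
Proof.
move=> H1 H2.
have Hk : 0 < INR k by apply: lt_0_INR; lia.
have HTk : 0 < INR (T - k) by apply: lt_0_INR; lia.
have Hk1 : INR k.+1 = INR k + 1 by rewrite S_INR.
have Hh := harm_le k.+1 (ltac:(lia) : (0 < T - k)%N).
have := HR H1 H2.
rewrite Hk1 in Hh * => H.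
have Hh' : c * harm (T - k) k.+1 <= c * ((INR k + 1) / INR (T - k)).
  by apply: Rmult_le_compat_l; lra.
have H' : (INR k + 1) * sig k <= INR k * sig k.+1 + c * ((INR k + 1) / INR (T - k)) by lra.
have Hpos : 0 < INR k * (INR k + 1) by nra.
apply: (Rmult_le_reg_r (INR k * (INR k + 1))) => //.
have -> : (sig k.+1 / (INR k + 1) + c / (INR k * INR (T - k))) * (INR k * (INR k + 1)) =
  INR k * sig k.+1 + c * ((INR k + 1) / INR (T - k)) by field; lra.
have -> : sig k / INR k * (INR k * (INR k + 1)) = (INR k + 1) * sig k by field; lra.
exact: H'.
Qed.

Lemma final_bound : sig L / INR L <= 12 * c * (1 + ln (/ mn)) / INR T.
Proof.
have Hmn := mn_pos. have Hln := ln_mn_ge0.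
move: HL => /andP[HL1 HLT].
have HT : 0 < INR T by apply: lt_0_INR; lia.
have HL' : 0 < INR L by apply: lt_0_INR; lia.
case: (leqP T (2 * L)) => Hcase.
-
  have HLT2 : INR T <= 2 * INR L.
    have := le_INR _ _ (ssrnat.leP Hcase); rewrite mult_INR /=; lra.
  have Hb := HB (ltac:(lia) : (1 <= L <= T)%N).
  have Hh := @harm_ln (T - L).+1 L.-1 (ltn0Sn _).
  have E : ((T - L).+1 + L.-1 = T)%N by lia.
  rewrite E in Hh.
  have Ha1 : 0 < INR (T - L).+1 by apply: lt_0_INR; lia.
  have Hi1 : / INR (T - L).+1 <= 1.
    rewrite -Rinv_1; apply: Rinv_le_contravar; first lra.
    by rewrite S_INR; have := pos_INR (T - L); lra.
  have HTL : INR (T - L).+1 = INR T - INR L + 1 by rewrite S_INR minus_INR; [|apply/leP].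
  have Hq : INR T / INR (T - L).+1 <= / mn.
    have H1 : INR T * mn < INR (T - L).+1.
      rewrite HTL; have := Rmin_r alpha (1 - alpha); rewrite -/mn => H; nra.
    apply: (Rmult_le_reg_r (INR (T - L).+1)) => //.
    rewrite /Rdiv Rmult_assoc Rinv_l; last lra.
    apply: (Rmult_le_reg_l mn) => //.
    rewrite Rmult_1_r -Rmult_assoc Rinv_r; lra.
  have Hlq := ln_le (ltac:(apply: Rdiv_lt_0_compat; lra) : 0 < INR T / INR (T - L).+1) Hq.
  have HL1' : sig L <= c * (5 + ln (/ mn)).
    have : c * harm (T - L).+1 (L.-1).+1 <= c * (1 + ln (/ mn)) by apply: Rmult_le_compat_l; lra.
    rewrite prednK //; lra.
  apply: Rle_trans (_ : c * (5 + ln (/ mn)) / INR L <= _).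
    by apply: Rmult_le_compat_r => //; apply: Rlt_le; apply: Rinv_0_lt_compat.
  apply: (Rmult_le_reg_r (INR L * INR T)); first nra.
  have -> : c * (5 + ln (/ mn)) / INR L * (INR L * INR T) = c * (5 + ln (/ mn)) * INR T by field; lra.
  have -> : 12 * c * (1 + ln (/ mn)) / INR T * (INR L * INR T) = 12 * c * (1 + ln (/ mn)) * INR L by field; lra.
  have H0 : 0 <= c * (5 + ln (/ mn)) by apply: Rmult_le_pos; lra.
  have X1 := Rmult_le_compat_l _ _ _ H0 HLT2.
  have X2 : 0 <= c * INR L * (2 + 10 * ln (/ mn)).
    apply: Rmult_le_pos; [apply: Rmult_le_pos|]; lra.
  lra.
-
  set J := (T - T %/ 2)%N.
  have HJ1 : (L < J)%N by rewrite /J; lia.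
  have HJT : (J <= T)%N by rewrite /J; lia.
  have HJ2 : (T <= 2 * J)%N by rewrite /J; lia.
  have HJ3 : (2 * (J - 1) <= T)%N by rewrite /J; lia.
  have HJ4 : (T < 2 * (T - J + 1))%N by rewrite /J; lia.
  have iter : forall n, (L + n <= J)%N ->
     sig L / INR L <= sig (L + n)%N / INR (L + n) + (2 * c / INR T) * harm L n.
    elim=> [|n IH] Hn.
      rewrite addn0 /harm big_ord0; lra.
    have := IH (ltac:(lia)).
    have Hk := @step_k (L + n)%N (ltac:(lia)) (ltac:(lia)).
    have Hk0 : 0 < INR (L + n) by apply: lt_0_INR; lia.
    have HTk : 0 < INR (T - (L + n)) by apply: lt_0_INR; lia.
    have HTk2 : INR T <= 2 * INR (T - (L + n)).
      have : (T <= 2 * (T - (L + n)))%N by lia.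
      move/ssrnat.leP/le_INR; rewrite mult_INR /=; lra.
    have Hb : c / (INR (L + n) * INR (T - (L + n))) <= 2 * c / INR T * / INR (L + n).
      apply: (Rmult_le_reg_r (INR (L + n) * INR (T - (L + n)) * INR T)); first by
        apply: Rmult_lt_0_compat => //; apply: Rmult_lt_0_compat.
      have -> : c / (INR (L + n) * INR (T - (L + n))) * (INR (L + n) * INR (T - (L + n)) * INR T) = c * INR T
        by field; lra.
      have -> : 2 * c / INR T * / INR (L + n) * (INR (L + n) * INR (T - (L + n)) * INR T) =
        2 * c * INR (T - (L + n)) by field; lra.
      nra.
    rewrite harm_Sr addnS; lra.
  have := iter (J - L)%N (ltac:(lia)).
  have -> : (L + (J - L) = J)%N by lia.
  have HJr : 0 < INR J by apply: lt_0_INR; lia.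
  have HsJ : sig J / INR J <= 10 * c / INR T.
    have Hb := HB (ltac:(lia) : (1 <= J <= T)%N).
    have Hh := @harm_le (T - J).+1 J (ltn0Sn _).
    have HTJ : 0 < INR (T - J).+1 by apply: lt_0_INR; lia.
    have HTJ2 : INR T <= 2 * INR (T - J).+1.
      have : (T <= 2 * (T - J).+1)%N by lia.
      move/ssrnat.leP/le_INR; rewrite mult_INR /=; lra.
    have HJ2r : INR T <= 2 * INR J.
      have := le_INR _ _ (ssrnat.leP HJ2); rewrite mult_INR /=; lra.
    have X : sig J <= 4 * c + c * (INR J / INR (T - J).+1).
      have : c * harm (T - J).+1 J <= c * (INR J / INR (T - J).+1) by apply: Rmult_le_compat_l; lra.
      lra.
    apply: (Rmult_le_reg_r (INR J * INR T * INR (T - J).+1)).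
      by apply: Rmult_lt_0_compat => //; apply: Rmult_lt_0_compat.
    have -> : 10 * c / INR T * (INR J * INR T * INR (T - J).+1) = 10 * c * INR J * INR (T - J).+1 by field; lra.
    have -> : sig J / INR J * (INR J * INR T * INR (T - J).+1) = sig J * INR T * INR (T - J).+1 by field; lra.
    have HP : 0 < INR T * INR (T - J).+1 by apply: Rmult_lt_0_compat.
    have := Rmult_le_compat_r _ _ _ (Rlt_le _ _ HP) X.
    have -> : (4 * c + c * (INR J / INR (T - J).+1)) * (INR T * INR (T - J).+1) =
      4 * c * INR T * INR (T - J).+1 + c * INR J * INR T by field; lra.
    have Y1 : 4 * c * INR T * INR (T - J).+1 <= 4 * c * (2 * INR J) * INR (T - J).+1.
      apply: Rmult_le_compat_r; first lra. apply: Rmult_le_compat_l; lra.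
    have Y2 : c * INR J * INR T <= c * INR J * (2 * INR (T - J).+1).
      apply: Rmult_le_compat_l; first by apply: Rmult_le_pos; lra. lra.
    lra.
  have Hharm : harm L (J - L) <= 1 + ln (/ mn).
    have E : (J - L = (J - L - 1).+1)%N by lia.
    rewrite E.
    have Hh := @harm_ln L (J - L - 1) HL1.
    have E2 : (L + (J - L - 1) = J - 1)%N by lia.
    rewrite E2 in Hh.
    have HiL : / INR L <= 1.
      rewrite -Rinv_1; apply: Rinv_le_contravar; first lra.
      have := le_INR _ _ (ssrnat.leP HL1); rewrite INR_1; lra.
    have HJ1r : 0 < INR (J - 1) by apply: lt_0_INR; lia.
    have HJ3r : 2 * INR (J - 1) <= INR T.
      have := le_INR _ _ (ssrnat.leP HJ3); rewrite mult_INR /=; lra.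
    have Hq : INR (J - 1) / INR L <= / mn.
      have Hm : mn <= alpha by rewrite /mn; apply: Rmin_l.
      apply: (Rmult_le_reg_r (INR L * mn)); first nra.
      have -> : INR (J - 1) / INR L * (INR L * mn) = INR (J - 1) * mn by field; lra.
      have -> : / mn * (INR L * mn) = INR L by field; lra.
      have : INR (J - 1) * mn <= INR (J - 1) * alpha by apply: Rmult_le_compat_l; lra.
      nra.
    have := ln_le (ltac:(apply: Rdiv_lt_0_compat; lra) : 0 < INR (J - 1) / INR L) Hq.
    lra.
  move=> H.
  have H2 : 2 * c / INR T * harm L (J - L) <= 2 * c / INR T * (1 + ln (/ mn)).
    apply: Rmult_le_compat_l => //; apply: Rlt_le; apply: Rdiv_lt_0_compat; lra.
  have -> : 12 * c * (1 + ln (/ mn)) / INR T =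
     10 * c / INR T + 2 * c / INR T * (1 + ln (/ mn)) + (10 * c / INR T) * ln (/ mn) by field; lra.
  have : 0 <= 10 * c / INR T * ln (/ mn).
    apply: Rmult_le_pos => //; apply: Rlt_le; apply: Rdiv_lt_0_compat; lra.
  lra.
Qed.
End Final.

Section SGD.
Variables (m d : nat) (W : vec m -> Prop) (Pi : vec m -> vec m) (F : vec m -> R)
  (mu : R) (xs : vec m) (h : 'I_d -> vec m -> vec m) (G : 'I_d -> R).
Hypothesis Hd : (0 < d)%N.
Hypothesis HPiW : forall y, W (Pi y).
Hypothesis HPi : forall y z, W z -> sq (vsub (Pi y) z) <= sq (vsub y z).
Hypothesis Hmu : 0 < mu.
Hypothesis HG : forall i, 0 < G i.
Hypothesis Hh : forall i x, W x -> sq (h i x) <= G i ^ 2.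
Hypothesis Hsc : forall x z, W x -> W z ->
  F x - F z + mu / 2 * sq (vsub x z) <=
  / INR d * \big[Rplus/0]_(i < d) dot (h i x) (vsub x z).
Hypothesis Hxs : W xs.
Hypothesis Hmin : forall x, W x -> mu / 2 * sq (vsub x xs) <= F x - F xs.

Local Notation p := (prob G).
Local Notation S := (sumO G).
Local Notation Gb := (Gbar G).
Local Notation step := (sgd_step Pi mu h G).

Lemma S_pos : 0 < S.
Proof.
rewrite /sumO; case: d Hd G HG => // d' _ G' HG'.
rewrite big_ord_recr /=.
have H0 : 0 <= \big[Rplus/0]_(i < d') G' (widen_ord (leqnSn d') i).
  by apply: bigR_ge0 => i _; apply: Rlt_le.
apply: Rplus_le_lt_0_compat; [exact: H0 | exact: HG'].
Qed.

Lemma d_pos : 0 < INR d.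
Proof. apply: lt_0_INR; exact/ltP. Qed.

Lemma psum : \big[Rplus/0]_(i < d) p i = 1.
Proof.
rewrite /prob /Rdiv bigR_const -/(sumO G); have := S_pos; move=> ?; field; lra.
Qed.

Lemma pnn i : 0 <= p i.
Proof. rewrite /prob; apply: Rlt_le; apply: Rdiv_lt_0_compat; [exact: HG | exact: S_pos]. Qed.

Lemma ppos i : 0 < p i.
Proof. rewrite /prob; apply: Rdiv_lt_0_compat; [exact: HG | exact: S_pos]. Qed.

Lemma one_step s y z : (0 < s)%N -> W y -> W z ->
  \big[Rplus/0]_(i < d) (p i * sq (vsub (step s i y) z)) <=
  sq (vsub y z) - 2 / (mu * INR s) * (F y - F z + mu / 2 * sq (vsub y z))
  + Gb ^ 2 / (mu ^ 2 * INR s ^ 2).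
Proof.
move=> Hs Wy Wz.
have Hs' : 0 < INR s by apply: lt_0_INR; exact/ltP.
have HS := S_pos. have Hdd := d_pos.
set eta := / (mu * INR s).
have Heta : 0 < eta by apply: Rinv_0_lt_compat; nra.
set A := sq (vsub y z).
apply: Rle_trans (_ : \big[Rplus/0]_(i < d)
   (p i * A + (-2 * (eta * / INR d)) * dot (h i y) (vsub y z)
    + (eta ^ 2 * (/ INR d) ^ 2 * S) * G i) <= _).
  apply: bigR_le => i _.
  have Hpi := ppos i. have HGi := HG i.
  set e := / (mu * INR s) * / (INR d * p i).
  have H1 : sq (vsub (step s i y) z) <= sq (vsub (vsub y z) (vscal e (h i y))).
    rewrite /sgd_step.
    have -> : vsub (vsub y z) (vscal e (h i y)) = vsub (vsub y (vscal e (h i y))) z.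
      by apply: vext => c; rewrite /vsub /vscal; ring.
    exact: HPi.
  have {}H1 : sq (vsub (step s i y) z) <= A - 2 * e * dot (h i y) (vsub y z) + e * e * sq (h i y).
    apply: (Rle_trans _ _ _ H1); right.
    rewrite sq_sub dot_scalr /sq dot_scall dot_scalr (dot_sym (vsub y z)) /A /sq; ring.
  have H2 := Hh i Wy.
  have Hpe : p i * e = eta * / INR d.
    rewrite /e /eta; field; repeat split; lra.
  have Hpe2 : p i * e * e * G i ^ 2 = eta ^ 2 * (/ INR d) ^ 2 * S * G i.
    rewrite /e /eta /prob; field; repeat split; try lra.
  have He : 0 <= p i * e * e by apply: Rmult_le_pos; [apply: Rmult_le_pos|]; rewrite /e; try lra;
    apply: Rlt_le; apply: Rmult_lt_0_compat; apply: Rinv_0_lt_compat; nra.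
  have T1 := Rmult_le_compat_l _ _ _ (Rlt_le _ _ Hpi) H1.
  have T2 := Rmult_le_compat_l _ _ _ He H2.
  rewrite Hpe2 in T2.
  have E1 : p i * (A - 2 * e * dot (h i y) (vsub y z) + e * e * sq (h i y)) =
    p i * A - 2 * (p i * e) * dot (h i y) (vsub y z) + (p i * e * e) * sq (h i y) by ring.
  rewrite E1 in T1.
  set q := p i * e * e in T1 T2.
  rewrite Hpe in T1.
  lra.
rewrite !bigR_add bigR_scal bigR_const psum bigR_scal -/(sumO G).
have HF := Hsc Wy Wz.
rewrite /Gbar.
have -> : 2 / (mu * INR s) = 2 * eta by rewrite /eta; field; lra.
have -> : (/ INR d * S) ^ 2 / (mu ^ 2 * INR s ^ 2) = eta ^ 2 * (/ INR d) ^ 2 * S * S.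
  by rewrite /eta; field; lra.
have -> : \big[Rplus/0]_i dot (h i y) (vsub y z) = \big[Rplus/0]_(i < d) dot (h i y) (vsub y z) by [].
have := Rmult_le_compat_l _ _ _ (Rlt_le _ _ Heta) HF.
rewrite /A; lra.
Qed.

Local Notation run := (sgd_run Pi mu h G).
Definition sumFz z (ys : seq (vec m)) := foldr (fun u acc => F u - F z + acc) 0 ys.

Lemma one_step' s y z : (0 < s)%N -> W y -> W z ->
  F y - F z + mu * INR s / 2 * \big[Rplus/0]_(i < d) (p i * sq (vsub (step s i y) z))
  <= mu / 2 * (INR s - 1) * sq (vsub y z) + Gb ^ 2 / (2 * mu) * / INR s.
Proof.
move=> Hs Wy Wz.
have Hs' : 0 < INR s by apply: lt_0_INR; exact/ltP.
have H := one_step Hs Wy Wz.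
have Hk : 0 < mu * INR s / 2 by nra.
have := Rmult_le_compat_l _ _ _ (Rlt_le _ _ Hk) H.
have -> : mu * INR s / 2 * (sq (vsub y z) - 2 / (mu * INR s) * (F y - F z + mu / 2 * sq (vsub y z)) +
   Gb ^ 2 / (mu ^ 2 * INR s ^ 2)) =
   mu * INR s / 2 * sq (vsub y z) - (F y - F z + mu / 2 * sq (vsub y z)) + Gb ^ 2 / (2 * mu) * / INR s.
  by field; lra.
lra.
Qed.

Lemma sum_p_aff a b (f : 'I_d -> R) :
  \big[Rplus/0]_(i < d) (p i * (a + (b * f i))) = a + b * \big[Rplus/0]_(i < d) (p i * f i).
Proof.
have -> : \big[Rplus/0]_(i < d) (p i * (a + (b * f i))) =
  \big[Rplus/0]_(i < d) (p i * a + b * (p i * f i)).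
  by apply: eq_bigr => i _; ring.
by rewrite bigR_add bigR_const psum bigR_scal Rmult_1_l.
Qed.

Lemma lemA N : forall s y z, (0 < s)%N -> W y -> W z ->
  expectN p N (fun l => sumFz z (run s y l)) <=
  mu / 2 * (INR s - 1) * sq (vsub y z) + Gb ^ 2 / (2 * mu) * harm s N.+1.
Proof.
elim: N => [|N IH] s y z Hs Wy Wz.
  rewrite /= harm_S /harm big_ord0.
  have H := one_step' Hs Wy Wz.
  have : 0 <= \big[Rplus/0]_(i < d) (p i * sq (vsub (step s i y) z)).
    by apply: bigR_ge0 => i _; apply: Rmult_le_pos; [exact: pnn| exact: sq_ge0].
  have Hs' : 0 < INR s by apply: lt_0_INR; exact/ltP.
  have : 0 < mu * INR s / 2 by nra.
  move=> H1 H2; have := Rmult_le_pos _ _ (Rlt_le _ _ H1) H2.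
  lra.
transitivity (\big[Rplus/0]_(i < d) (p i * expectN p N
   (fun l => F y - F z + sumFz z (run s.+1 (step s i y) l)))); first reflexivity.
under eq_bigr do rewrite (E_add_const psum).
apply: Rle_trans (_ : \big[Rplus/0]_(i < d) (p i * ((F y - F z + Gb ^ 2 / (2 * mu) * harm s.+1 N.+1)
   + (mu * INR s / 2) * sq (vsub (step s i y) z))) <= _).
  apply: bigR_le => i _; apply: Rmult_le_compat_l; first exact: pnn.
  have := IH s.+1 (step s i y) z (ltn0Sn s) (HPiW _) Wz.
  rewrite S_INR; lra.
rewrite sum_p_aff (harm_S s N.+1).
have := one_step' Hs Wy Wz. lra.
Qed.

Fixpoint endp s y (l : seq 'I_d) : vec m :=
  match l with [::] => y | i :: l' => endp s.+1 (step s i y) l' end.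

Lemma endp_W s y l : W y -> W (endp s y l).
Proof. elim: l s y => //= i l IH s y _; apply: IH; exact: HPiW. Qed.

Lemma endp_rcons s y l i : endp s y (l ++ [:: i]) = step (s + size l) i (endp s y l).
Proof. elim: l s y => [|j l IH] s y /=; first by rewrite addn0. by rewrite IH addSnnS. Qed.

Lemma run_drop s y l1 l2 : drop (size l1) (run s y (l1 ++ l2)) = run (s + size l1) (endp s y l1) l2.
Proof. elim: l1 s y => [|j l IH] s y /=; first by rewrite addn0 drop0. by rewrite IH addSnnS. Qed.

Lemma size_run s y l : size (run s y l) = (size l).+1.
Proof. by elim: l s y => //= i l IH s y; rewrite IH. Qed.

Variable x1 : vec m.
Hypothesis Hx1 : W x1.

Definition Q n (phi : vec m -> R) := expectN p n (fun l => phi (endp 1 x1 l)).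

Lemma Q_shift n phi : Q n.+1 phi = Q n (fun y => \big[Rplus/0]_(i < d) (p i * phi (step n.+1 i y))).
Proof.
rewrite /Q E_snoc; apply: (E_ext pnn) => l Hl.
by apply: eq_bigr => i _; rewrite endp_rcons Hl add1n.
Qed.

Lemma Q_mono n phi psi : (forall y, W y -> phi y <= psi y) -> Q n phi <= Q n psi.
Proof. move=> H; apply: (E_mono pnn) => l _; apply: H; exact: endp_W. Qed.

Lemma Q_add n phi psi : Q n (fun y => phi y + psi y) = Q n phi + Q n psi.
Proof. by rewrite /Q E_add. Qed.

Lemma Q_aff n a b phi : Q n (fun y => a * phi y + b) = a * Q n phi + b.
Proof. by rewrite /Q E_add E_scal (E_const psum). Qed.

Definition Dq n := Q n (fun y => sq (vsub y xs)).

Lemma step_xs s y : (0 < s)%N -> W y ->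
  \big[Rplus/0]_(i < d) (p i * sq (vsub (step s i y) xs)) <=
  (1 - 2 / INR s) * sq (vsub y xs) + Gb ^ 2 / mu ^ 2 * (/ INR s) ^ 2.
Proof.
move=> Hs Wy.
have Hs' : 0 < INR s by apply: lt_0_INR; exact/ltP.
have H := one_step Hs Wy Hxs.
have H2 := Hmin Wy.
have Hk : 0 < 2 / (mu * INR s) by apply: Rdiv_lt_0_compat; nra.
have X := Rmult_le_compat_l _ _ _ (Rlt_le _ _ Hk) H2.
have E1 : Gb ^ 2 / (mu ^ 2 * INR s ^ 2) = Gb ^ 2 / mu ^ 2 * (/ INR s) ^ 2 by field; lra.
have E2 : 2 / (mu * INR s) * (mu / 2 * sq (vsub y xs)) = / INR s * sq (vsub y xs) by field; lra.
have E3 : sq (vsub y xs) - 2 / (mu * INR s) * (F y - F xs + mu / 2 * sq (vsub y xs)) =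
  sq (vsub y xs) - 2 / (mu * INR s) * (F y - F xs) - / INR s * sq (vsub y xs) by field; lra.
rewrite E1 E3 in H. rewrite E2 in X.
have -> : 2 / INR s = 2 * / INR s by [].
lra.
Qed.

Lemma Dq_bound n : (0 < n)%N -> Dq n <= 4 * (Gb ^ 2 / mu ^ 2) / INR n.+1.
Proof.
have HK : 0 <= Gb ^ 2 / mu ^ 2 by apply: Rmult_le_pos; [nra| apply: Rlt_le; apply: Rinv_0_lt_compat; nra].
set K := Gb ^ 2 / mu ^ 2 in HK *.
elim: n => // n IH _.
rewrite /Dq Q_shift.
case: n IH => [|n] IH.
  rewrite /Q /=.
  apply: Rle_trans (step_xs (ltn0Sn 0) Hx1) _.
  have := sq_ge0 (vsub x1 xs).
  rewrite -/K INR_1 Rinv_1. lra.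
apply: Rle_trans (_ : Q n.+1 (fun y => (1 - 2 / INR n.+2) * sq (vsub y xs) + K * (/ INR n.+2) ^ 2) <= _).
  apply: Q_mono => y Wy; exact: step_xs.
rewrite Q_aff.
have IH' := IH (ltn0Sn n); rewrite -/(Dq n.+1) in IH' *.
set t := INR n.+2 in IH' *.
have Ht : 2 <= t by rewrite /t !S_INR; have := pos_INR n; lra.
have Hc : 0 <= 1 - 2 / t.
  have -> : 1 - 2 / t = (t - 2) / t by field; lra.
  apply: Rmult_le_pos; [lra| apply: Rlt_le; apply: Rinv_0_lt_compat; lra].
have := Rmult_le_compat_l _ _ _ Hc IH'.
have -> : INR n.+3 = t + 1 by rewrite /t (S_INR n.+2).
move=> H.
apply: Rle_trans (_ : (1 - 2 / t) * (4 * K / t) + K * (/ t) ^ 2 <= _); first lra.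
have E : 4 * K / (t + 1) - ((1 - 2 / t) * (4 * K / t) + K * (/ t) ^ 2) =
  K * (3 * t + 7) / (t ^ 2 * (t + 1)) by field; lra.
have : 0 <= K * (3 * t + 7) / (t ^ 2 * (t + 1)).
  apply: Rmult_le_pos; first by apply: Rmult_le_pos; lra.
  apply: Rlt_le; apply: Rinv_0_lt_compat; nra.
lra.
Qed.


Hypothesis HFc : convex_fun F.

Definition V j s y := expectN p j.-1 (fun l => sumFz xs (run s y l)).
Definition Sig T j := Q (T - j) (V j (T - j).+1).
Definition fq T j := Q (T - j) (fun y => F y - F xs).
Local Notation c := (Gb ^ 2 / (2 * mu)).

Lemma V_split j s y : V j.+2 s y =
  F y - F xs + \big[Rplus/0]_(i < d) (p i * V j.+1 s.+1 (step s i y)).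
Proof.
transitivity (\big[Rplus/0]_(i < d) (p i * expectN p j
   (fun l => F y - F xs + sumFz xs (run s.+1 (step s i y) l)))); first reflexivity.
under eq_bigr do rewrite (E_add_const psum).
have := sum_p_aff (F y - F xs) 1 (fun i => V j.+1 s.+1 (step s i y)).
rewrite Rmult_1_l => <-.
by apply: eq_bigr => i _; rewrite Rmult_1_l.
Qed.

Lemma sig_split T j : (2 <= j <= T)%N -> Sig T j = fq T j + Sig T j.-1.
Proof.
case: j => [|[|j]] // /andP[_ HjT].
rewrite /Sig /fq.
have -> : V j.+2 (T - j.+2).+1 = fun y => (F y - F xs) +
   \big[Rplus/0]_(i < d) (p i * V j.+1 (T - j.+2).+2 (step (T - j.+2).+1 i y)).
  by apply: functional_extensionality => y; rewrite V_split.
rewrite Q_add -Q_shift.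
have -> : (T - j.+1 = (T - j.+2).+1)%N by lia.
done.
Qed.

Lemma sumFz_shift z w ys : sumFz z ys = sumFz w ys + INR (size ys) * (F w - F z).
Proof.
elim: ys => [|u ys IH]; first by rewrite /= Rmult_0_l; ring.
change (F u - F z + sumFz z ys = F u - F w + sumFz w ys + INR (size ys).+1 * (F w - F z)).
rewrite IH S_INR; ring.
Qed.

Lemma sumFz_sum z ys : sumFz z ys = foldr (fun u acc => F u + acc) 0 ys - INR (size ys) * F z.
Proof.
elim: ys => [|u ys IH]; first by rewrite /= Rmult_0_l; ring.
change (F u - F z + sumFz z ys = F u + foldr (fun u acc => F u + acc) 0 ys - INR (size ys).+1 * F z).
rewrite IH S_INR; ring.
Qed.

Lemma sig_le T j : (1 <= j <= T)%N -> Sig T j <= INR j * fq T j + c * harm (T - j).+1 j.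
Proof.
move=> /andP[Hj _].
rewrite /Sig /fq -Q_aff; apply: Q_mono => y Wy.
rewrite /V.
have -> : expectN p j.-1 (fun l => sumFz xs (run (T - j).+1 y l)) =
   expectN p j.-1 (fun l => INR j * (F y - F xs) + sumFz y (run (T - j).+1 y l)).
  apply: (E_ext pnn) => l Hl; rewrite (sumFz_shift xs y) size_run Hl prednK //; ring.
rewrite (E_add_const psum).
have := lemA j.-1 (ltn0Sn (T - j)) Wy Wy.
rewrite prednK //.
have -> : sq (vsub y y) = 0.
  rewrite /sq /dot /sumO big1 // => i _; rewrite /vsub; ring.
lra.
Qed.

Lemma sig_base T J : (1 <= J <= T)%N -> Sig T J <= 4 * c + c * harm (T - J).+1 J.
Proof.
move=> /andP[HJ HJT].
apply: Rle_trans (_ : Q (T - J) (fun y => (mu / 2 * INR (T - J)) * sq (vsub y xs) + c * harm (T - J).+1 J) <= _).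
  apply: Q_mono => y Wy; rewrite /V.
  have := lemA J.-1 (ltn0Sn (T - J)) Wy Hxs.
  by rewrite prednK // S_INR; have -> : INR (T - J) + 1 - 1 = INR (T - J) by ring.
rewrite Q_aff -/(Dq (T - J)).
suff : mu / 2 * INR (T - J) * Dq (T - J) <= 4 * c by lra.
have Hc : 0 < c.
  apply: Rdiv_lt_0_compat; last lra.
  have : 0 < Gb by rewrite /Gbar; apply: Rmult_lt_0_compat; [apply: Rinv_0_lt_compat; exact: d_pos| exact: S_pos].
  nra.
case E : (T - J)%N => [|n].
  rewrite INR_0; lra.
have HD := Dq_bound (ltn0Sn n).
have Hn : 0 <= INR n := pos_INR n.
have HK : 0 <= Gb ^ 2 / mu ^ 2 by apply: Rmult_le_pos; [nra| apply: Rlt_le; apply: Rinv_0_lt_compat; nra].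
have Hm : 0 <= mu / 2 * INR n.+1 by apply: Rmult_le_pos; [lra| exact: pos_INR].
apply: Rle_trans (Rmult_le_compat_l _ _ _ Hm HD) _.
have -> : mu / 2 * INR n.+1 * (4 * (Gb ^ 2 / mu ^ 2) / INR n.+2) = 4 * c * (INR n.+1 / INR n.+2).
  have := pos_INR n.+1; rewrite (S_INR n.+1) => ?; field; split; lra.
have : INR n.+1 / INR n.+2 <= 1.
  have := pos_INR n.+1; rewrite (S_INR n.+1) => ?.
  apply: (Rmult_le_reg_r (INR n.+1 + 1)); [lra|].
  rewrite /Rdiv Rmult_assoc Rinv_l; lra.
have : 0 <= INR n.+1 / INR n.+2 by apply: Rmult_le_pos; [exact: pos_INR| apply: Rlt_le; apply: Rinv_0_lt_compat; apply: lt_0_INR; lia].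
nra.
Qed.

Lemma tail_bound T L : (1 <= L <= T)%N ->
  expectN p T.-1 (fun l => F (tail_avg L (run 1 x1 l)) - F xs) <= Sig T L / INR L.
Proof.
move=> /andP[HL HLT].
have -> : T.-1 = ((T - L) + L.-1)%N by lia.
rewrite E_cat /Sig /Q /Rdiv Rmult_comm -E_scal.
apply: (E_mono pnn) => l1 Hl1.
rewrite /V -E_scal.
apply: (E_mono pnn) => l2 Hl2.
set ys := run 1 x1 (l1 ++ l2).
have Hys : size ys = T by rewrite /ys size_run size_cat Hl1 Hl2; lia.
rewrite /tail_avg Hys.
have -> : (T - L)%N = size l1 by [].
rewrite /ys run_drop Hl1 add1n.
set zs := run (T - L).+1 (endp 1 x1 l1) l2.
have Hzs : size zs = L.-1.+1 by rewrite /zs size_run Hl2.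
have := jensen HFc Hzs.
rewrite prednK //.
rewrite sumFz_sum Hzs prednK // => H.
have HL' : 0 < INR L by apply: lt_0_INR; lia.
have -> : / INR L * (foldr (fun u acc => F u + acc) 0 zs - INR L * F xs) =
  / INR L * foldr (fun u acc => F u + acc) 0 zs - F xs by field; lra.
rewrite /vsum in H; lra.
Qed.

Lemma sgd_bound T L alpha : 0 < alpha < 1 -> (1 <= L <= T)%N ->
  alpha * INR T <= INR L -> INR L < alpha * INR T + 1 ->
  expectN p T.-1 (fun l => F (tail_avg L (run 1 x1 l)) - F xs) <=
  12 * c * (1 + ln (/ Rmin alpha (1 - alpha))) / INR T.
Proof.
move=> Ha HL HLa HLb.
apply: Rle_trans (tail_bound HL) _.
have Hc : 0 < c.
  apply: Rdiv_lt_0_compat; last lra.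
  have : 0 < Gb by rewrite /Gbar; apply: Rmult_lt_0_compat; [apply: Rinv_0_lt_compat; exact: d_pos| exact: S_pos].
  nra.
apply: (final_bound (sig := Sig T)) => //.
  move=> k Hk HkT.
  have Hs := @sig_split T k.+1 (ltac:(lia)).
  have Hl := @sig_le T k.+1 (ltac:(lia)).
  have E : ((T - k.+1).+1 = T - k)%N by lia.
  rewrite E in Hl. rewrite Hs in Hl *. simpl (k.+1.-1) in *.
  rewrite S_INR in Hl *; lra.
move=> J HJ; exact: sig_base.
Qed.

End SGD.

Lemma sq_sym m (x y : vec m) : sq (vsub x y) = sq (vsub y x).
Proof. rewrite /sq /dot /sumO; apply: eq_bigr => i _; rewrite /vsub; ring. Qed.

Lemma ceil_spec x : 0 < x -> x <= INR (ceil_nat x) < x + 1 /\ (1 <= ceil_nat x)%N.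
Proof.
move=> Hx.
rewrite /ceil_nat /Int_part.
have [H1 H2] := archimed (- x).
set u := up (- x) in H1 H2 *.
have Ez : IZR (- (u - 1)) = 1 - IZR u by rewrite opp_IZR minus_IZR; ring.
have Hz1 : 0 < IZR (- (u - 1)) by lra.
have Hz : (0 < - (u - 1))%Z by apply: lt_IZR.
rewrite INR_IZR_INZ Z2Nat.id; last lia.
split; first lra.
apply/leP; lia.
Qed.

Unset Implicit Arguments.

Theorem theorem4p1 :
  exists C : R,
  forall (m n b : nat) (W : vec m -> Prop) (Pi : vec m -> vec m)
    (g : 'I_n -> vec m -> R) (mu : R) (xstar : vec m)
    (tau : 'I_(n %/ b) -> {set 'I_n}) (h : 'I_(n %/ b) -> vec m -> vec m)
    (G : 'I_(n %/ b) -> R) (x1 : vec m) (alpha : R),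
    (exists w, W w) -> convex_Rm W -> closed_Rm W -> is_proj W Pi ->
    (forall j, convex_fun (g j)) ->
    0 < mu -> strongly_convex_on mu W (avgF g) ->
    W xstar -> (forall x, W x -> avgF g xstar <= avgF g x) ->
    (0 < n)%N -> (b %| n)%N ->
    (forall i, #|tau i| = b) ->
    (forall i j, i != j -> [disjoint tau i & tau j]) ->
    (forall j, exists i, j \in tau i) ->
    (forall i x, is_subgradient (batch_fun (tau i) b g) x (h i x)) ->
    (forall i, 0 < G i) ->
    (forall i x, W x -> vnorm (h i x) <= G i) ->
    W x1 -> 0 < alpha < 1 ->
    forall (eps : R) (k : nat), 0 < eps -> (1 <= k)%N ->
      C * (Gbar G) ^ 2 * m_alpha alpha / (mu * eps) <= INR k ->
      expectN (prob G) k.-1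
        (fun l => avgF g (tail_avg (ceil_nat (alpha * INR k))
                                   (sgd_run Pi mu h G 1 x1 l))
                  - avgF g xstar) <= eps.
Proof.
exists 6.
move=> m n b W Pi g mu xs tau h G x1 alpha _ HWc _ HP Hgc Hmu Hsc Wxs Hxs Hn Hbn
  _ Hdis Hcov Hsub HG Hh Hx1 Ha eps k Heps Hk HkC.
set d := (n %/ b)%N.
have Hb : (0 < b)%N.
  move: Hbn; case: (posnP b) => [-> |//]; rewrite dvd0n => /eqP; lia.
have Hnd : (n = d * b)%N by rewrite /d divnK.
have Hd : (0 < d)%N by move: Hnd Hn; case: (d) => //= ->.
have Hdr : 0 < INR d by apply: lt_0_INR; lia.
have Hbr : 0 < INR b by apply: lt_0_INR; lia.
have Hpart : forall f : 'I_n -> R, \big[Rplus/0]_(j < n) f j =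
    \big[Rplus/0]_(i < d) \big[Rplus/0]_(j in tau i) f j.
  move=> f.
  under [RHS]eq_bigr do rewrite big_mkcond.
  rewrite exchange_big; apply: eq_bigr => j _.
  have [i0 Hi0] := Hcov j.
  rewrite (bigD1 i0) //= Hi0 big1 /=; first by rewrite Rplus_0_r.
  move=> i Hi; rewrite (disjointFr (Hdis i0 i _) Hi0) //; by rewrite eq_sym.
have HFp : forall y, avgF g y = / INR d * \big[Rplus/0]_(i < d) batch_fun (tau i) b g y.
  move=> y; rewrite /avgF /batch_fun Hpart bigR_scal -Rmult_assoc -Rinv_mult.
  have HnR : INR n = INR d * INR b by rewrite -mult_INR; congr INR; lia.
  by rewrite HnR.
have Hsubs : forall x y, avgF g x + / INR d * \big[Rplus/0]_(i < d) dot (h i x) (vsub y x) <= avgF g y.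
  move=> x y; rewrite !HFp -Rmult_plus_distr_l -bigR_add.
  apply: Rmult_le_compat_l; first by apply: Rlt_le; apply: Rinv_0_lt_compat.
  apply: bigR_le => i _; exact: Hsub.
have Hsc' : forall x z, W x -> W z ->
    avgF g x - avgF g z + mu / 2 * sq (vsub x z) <=
    / INR d * \big[Rplus/0]_(i < d) dot (h i x) (vsub x z).
  move=> x z Wx Wz.
  set A := / INR d * \big[Rplus/0]_(i < d) dot (h i x) (vsub z x).
  have HA : / INR d * \big[Rplus/0]_(i < d) dot (h i x) (vsub x z) = - A.
    rewrite /A Ropp_mult_distr_r; congr (_ * _).
    have -> : - (\big[Rplus/0]_(i < d) dot (h i x) (vsub z x)) =
       (-1) * (\big[Rplus/0]_(i < d) dot (h i x) (vsub z x)) by ring.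
    rewrite -bigR_scal; apply: eq_bigr => i _; rewrite !dot_subr; ring.
  rewrite HA sq_sym.
  set S := sq (vsub z x).
  suff : A - (avgF g z - avgF g x - mu / 2 * S) <= 0 by lra.
  apply: (@lim0 _ (mu / 2 * S)) => t Ht.
  have Ht' : 0 <= t <= 1 by lra.
  have H1 := Hsc z x t Wz Wx Ht'.
  have H2 := Hsubs x (vadd (vscal t z) (vscal (1 - t) x)).
  have EE : vsub (vadd (vscal t z) (vscal (1 - t) x)) x = vscal t (vsub z x).
    by apply: vext => i; rewrite /vsub /vadd /vscal; ring.
  rewrite EE in H2.
  have E : / INR d * \big[Rplus/0]_(i < d) dot (h i x) (vscal t (vsub z x)) = t * A.
    rewrite /A; under eq_bigr do rewrite dot_scalr.
    rewrite bigR_scal -Rmult_assoc (Rmult_comm (/ INR d) t) Rmult_assoc; reflexivity.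
  rewrite E in H2.
  rewrite vnorm_sq -/S in H1.
  have : t * A <= t * (avgF g z - avgF g x - mu / 2 * S + t * (mu / 2 * S)).
    have -> : t * (avgF g z - avgF g x - mu / 2 * S + t * (mu / 2 * S)) =
      t * avgF g z + (1 - t) * avgF g x - mu / 2 * t * (1 - t) * S - avgF g x by ring.
    lra.
  move=> H3; have := Rmult_le_reg_l _ _ _ (proj1 Ht) H3; lra.
have Hmin : forall x, W x -> mu / 2 * sq (vsub x xs) <= avgF g x - avgF g xs.
  move=> x Wx.
  set S := sq (vsub x xs).
  suff : mu / 2 * S - (avgF g x - avgF g xs) <= 0 by lra.
  apply: (@lim0 _ (mu / 2 * S)) => t Ht.
  have Ht' : 0 <= t <= 1 by lra.
  have H1 := Hsc x xs t Wx Wxs Ht'.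
  have H2 := Hxs _ (HWc x xs t Wx Wxs Ht').
  rewrite vnorm_sq -/S in H1.
  have E : t * (t * (mu / 2 * S)) - t * (mu / 2 * S - (avgF g x - avgF g xs)) =
      t * avgF g x + (1 - t) * avgF g xs - mu / 2 * t * (1 - t) * S - avgF g xs by ring.
  have H3 : t * (mu / 2 * S - (avgF g x - avgF g xs)) <= t * (t * (mu / 2 * S)) by lra.
  exact: Rmult_le_reg_l _ _ _ (proj1 Ht) H3.
have HFc : convex_fun (avgF g).
  move=> x y t Ht; rewrite /avgF.
  have Hn' : 0 <= / INR n by apply: Rlt_le; apply: Rinv_0_lt_compat; apply: lt_0_INR; lia.
  have : \big[Rplus/0]_(j < n) g j (vadd (vscal t x) (vscal (1 - t) y)) <=
     \big[Rplus/0]_(j < n) (t * g j x + (1 - t) * g j y).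
    apply: bigR_le => j _; exact: Hgc.
  set X := \big[Rplus/0]_(j < n) g j x.
  set Y := \big[Rplus/0]_(j < n) g j y.
  have -> : \big[Rplus/0]_(j < n) (t * g j x + (1 - t) * g j y) = t * X + (1 - t) * Y.
    by rewrite bigR_add !bigR_scal.
  move=> H.
  have := Rmult_le_compat_l _ _ _ Hn' H.
  move=> H'; apply: (Rle_trans _ _ _ H'); right; ring.
have HPiW : forall y, W (Pi y) by move=> y; case: (HP y).
have HPi := proj_sq HWc HP.
have Hh' : forall i x, W x -> sq (h i x) <= G i ^ 2.
  move=> i x Wx; rewrite -vnorm_sq; apply: pow_incr; split; last exact: Hh.
  exact: sqrt_pos.
have Hkr : 0 < INR k by apply: lt_0_INR; lia.
have Hx : 0 < alpha * INR k by nra.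
have [[HL1 HL2] HL3] := @ceil_spec _ Hx.
set L := ceil_nat (alpha * INR k) in HL1 HL2 HL3 *.
have HLk : (L <= k)%N.
  have : INR L < INR k.+1 by rewrite S_INR; nra.
  move/INR_lt/ltP; done.
have := @sgd_bound m d W Pi (avgF g) mu xs h G Hd HPiW HPi Hmu HG Hh' Hsc' Wxs Hmin x1 Hx1 HFc
  k L alpha Ha (ltac:(lia)) HL1 HL2.
rewrite /m_alpha in HkC *.
set M := 1 + ln (/ Rmin alpha (1 - alpha)) in HkC *.
move=> H; apply: (Rle_trans _ _ _ H).
have HG2 : 0 <= Gbar G ^ 2 by nra.
have : 6 * Gbar G ^ 2 * M <= INR k * (mu * eps).
  have Hme : 0 < mu * eps by nra.
  have := Rmult_le_compat_r _ _ _ (Rlt_le _ _ Hme) HkC.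
  by rewrite /Rdiv Rmult_assoc Rinv_l; [rewrite Rmult_1_r|lra].
move=> H2.
apply: (Rmult_le_reg_r (INR k * mu)); first nra.
have -> : 12 * (Gbar G ^ 2 / (2 * mu)) * M / INR k * (INR k * mu) = 6 * Gbar G ^ 2 * M by field; lra.
lra.
Qed.
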